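(* Let $H$ be an Abelian group, $X$ a simplicial set, $Z\subset X$ a simplicial subset with inclusion $i:Z\to X$, and $j:X\to X/Z$ the quotient map collapsing $Z$ to a point. Let $\beta:(X/Z)_2\to H$ be a normalized 2-cocycle, let $\eta$ be the $N(H)$-valued twisting function on $X/Z$ associated to $\beta$, and let $\eta|_X=\eta\circ j$. Let $\mathrm{sDist}_\eta(X/Z)$ be the set of twisted distributions on $\pi_\eta: N(H)\times_\eta X/Z\to X/Z$, and let $\mathrm{sDist}_\eta(X,0)$ be the set of twisted distributions $p$ on $N(H)\times_{\eta|_X}X\to X$ such that $p\circ i=\delta^{\varphi_0}$, where $\varphi_0(z)=(0,z)$ is the zero section over $Z$. Then there is a convex isomorphism (a bijection preserving convex combinations) \[ \mathrm{sDist}_\eta(X/Z)\cong \mathrm{sDist}_\eta(X,0). \]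
   Context: Distributions take values in $R=\mathbb{R}_{\ge 0}$: $D(S)$ is the set of finitely supported $p:S\to\mathbb{R}_{\ge0}$ with $\sum_s p(s)=1$, extended levelwise to simplicial sets. For a simplicial map $\pi:E\to Y$, a (twisted) distribution on $\pi$ is a simplicial map $p:Y\to D(E)$ with $D(\pi)\circ p=\delta$ ($\delta$ = delta distribution). $N(H)$ is the nerve of $H$: $N(H)_n=H^n$, $d_0$ drops the first entry, $d_n$ drops the last, $d_i(a_1,\dots,a_n)=(\dots,a_i+a_{i+1},\dots)$ for $0<i<n$, $s_j$ inserts $0$ after the $j$-th entry. A twisting function $\eta=\{\eta_n:Y_n\to N(H)_{n-1}\}$ defines the simplicial set $N(H)\times_\eta Y$ with simplices $N(H)_n\times Y_n$, faces $d_i(g,y)=(d_ig,d_iy)$ for $i>0$, $d_0(g,y)=(d_0g+\eta_n(y),d_0y)$, degeneracies componentwise. A normalized 2-cocycle is $\beta:Y_2\to H$ vanishing on degenerate simplices with $\beta(d_0\sigma)-\beta(d_1\sigma)+\beta(d_2\sigma)-\beta(d_3\sigma)=0$ for $\sigma\in Y_3$; its associated twisting function is $\eta_1=0$, $\eta_2=\beta$, $\eta_n(y)=\big(\beta(d_3\cdots d_n y),\ \eta_{n-1}(d_1y)-\eta_{n-1}(d_0y)\big)\in H\times H^{n-2}$. Since $j\circ i$ factors through a point, $\eta|_X$ vanishes on $Z$, so the restriction of $N(H)\times_{\eta|_X}X$ to $Z$ is $N(H)\times Z$ and $p\circ i$ is a distribution on it. *)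

(* Defs.v *)
From mathcomp Require Import all_boot all_algebra.
From mathcomp Require Import boolp classical_sets cardinality fsbigop reals.
Set Implicit Arguments. Unset Strict Implicit. Unset Printing Implicit Defensive.
Import GRing.Theory Num.Theory.
Local Open Scope ring_scope.
Local Open Scope classical_set_scope.

(* face n i : X_(n+1) -> X_n  is d_i (meaningful for i <= n+1),
   degen n j : X_n -> X_(n+1) is s_j (meaningful for j <= n).               *)
Record sdata := SData {
  sx :> nat -> choiceType;
  face : forall n : nat, nat -> sx n.+1 -> sx n;
  degen : forall n : nat, nat -> sx n -> sx n.+1 }.
Arguments face {s} n i _.
Arguments degen {s} n j _.

Definition isSSet (X : sdata) : Prop :=
  [/\ (forall n (x : X n.+2) i j, (i < j <= n.+2)%N ->
         face n i (face n.+1 j x) = face n j.-1 (face n.+1 i x)),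
      (forall n (x : X n) i j, (i <= j <= n)%N ->
         degen n.+1 i (degen n j x) = degen n.+1 j.+1 (degen n i x)),
      (forall n (x : X n.+1) i j, (i < j <= n.+1)%N ->
         face n.+1 i (degen n.+1 j x) = degen n j.-1 (face n i x)),
      (forall n (x : X n) j, (j <= n)%N ->
         face n j (degen n j x) = x /\ face n j.+1 (degen n j x) = x)
    & (forall n (x : X n.+1) i j, (j.+1 < i <= n.+2)%N ->
         face n.+1 i (degen n.+1 j x) = degen n j (face n i.-1 x))].

Definition subSSet (X : sdata) (Z : forall n, pred (X n)) : Prop :=
  (forall n i (x : X n.+1), (i <= n.+1)%N -> Z n.+1 x -> Z n (face n i x)) /\
  (forall n j (x : X n), (j <= n)%N -> Z n x -> Z n.+1 (degen n j x)).

(* (X/Z)_n = (X_n \ Z_n) + {*}; None is the collapsed point.                 *)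
Definition quot_carrier (X : sdata) (Z : forall n, pred (X n)) (n : nat) : choiceType :=
  Choice.clone (option {x : X n | ~~ Z n x}) _.

Definition quot (X : sdata) (Z : forall n, pred (X n)) : sdata :=
  @SData (quot_carrier Z)
    (fun n i o => obind (fun x => insub (face n i (val x))) o)
    (fun n j o => obind (fun x => insub (degen n j (val x))) o).

Definition qmap (X : sdata) (Z : forall n, pred (X n)) (n : nat) (x : X n) :
  quot Z n := insub x.

Section Nerve.
Variable H : zmodType.

(* N(H)_n = H^n, an n-tuple (a_1,...,a_n) stored 0-based *)
Definition NH (n : nat) := {ffun 'I_n -> H}.

Definition nget n (g : NH n) (k : nat) : H :=
  if insub k is Some o then g o else 0.

Definition nface n (i : nat) (g : NH n.+1) : NH n :=
  [ffun k : 'I_n => if (k.+1 < i)%N then nget g k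
                    else if k.+1 == i then nget g k + nget g k.+1
                    else nget g k.+1].

Definition ndegen n (j : nat) (g : NH n) : NH n.+1 :=
  [ffun k : 'I_n.+1 => if (k < j)%N then nget g k
                       else if k == j :> nat then 0 else nget g k.-1].

Definition nadd n (g h : NH n) : NH n := [ffun k => g k + h k].

Definition tprod (Y : sdata) (tw : forall n, Y n.+1 -> NH n) : sdata :=
  @SData (fun n => Choice.clone (NH n * Y n)%type _)
    (fun n i gy => if i == 0%N then (nadd (nface 0 gy.1) (tw n gy.2), face n 0 gy.2)
                   else (nface i gy.1, face n i gy.2))
    (fun n j gy => (ndegen j gy.1, degen n j gy.2)).

Definition tproj (Y : sdata) (tw : forall n, Y n.+1 -> NH n) n
  (gy : tprod tw n) : Y n := gy.2.

Definition normCocycle (Y : sdata) (beta : Y 2 -> H) : Prop :=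
  (forall (y : Y 1) j, (j <= 1)%N -> beta (degen 1 j y) = 0) /\
  (forall s : Y 3, beta (face 2 0 s) - beta (face 2 1 s)
                   + beta (face 2 2 s) - beta (face 2 3 s) = 0).

Fixpoint topfaces (Y : sdata) (k : nat) : Y k.+2 -> Y 2 :=
  match k return Y k.+2 -> Y 2 with
  | 0 => fun y => y
  | k'.+1 => fun y => @topfaces Y k' (face k'.+2 k'.+3 y)
  end.

Fixpoint etaL (Y : sdata) (beta : Y 2 -> H) (m : nat) : Y m.+1 -> seq H :=
  match m return Y m.+1 -> seq H with
  | 0 => fun _ => [::]
  | S m1 =>
    match m1 return (Y m1.+1 -> seq H) -> Y m1.+2 -> seq H with
    | 0 => fun _ y => [:: beta y]
    | S k => fun rec y =>
        beta (@topfaces Y k.+1 y) ::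
          [seq p.1 - p.2 | p <- zip (rec (face k.+2 1 y)) (rec (face k.+2 0 y))]
    end (@etaL Y beta m1)
  end.

(* eta n : Y_(n+1) -> N(H)_n  (this is eta_(n+1) of the paper) *)
Definition twf (Y : sdata) (beta : Y 2 -> H) (n : nat) (y : Y n.+1) : NH n :=
  [ffun k : 'I_n => nth 0 (@etaL Y beta n y) k].

End Nerve.

Section Dist.
Variable R : realType.

Definition isDist (S : choiceType) (p : S -> R) : Prop :=
  [/\ forall x, 0 <= p x, finite_set [set x | p x != 0]
    & \sum_(x \in [set: S]) p x = 1].

Definition push (S T : choiceType) (f : S -> T) (p : S -> R) : T -> R :=
  fun t => \sum_(x \in [set x | f x = t]) p x.

Definition delta (S : choiceType) (s : S) : S -> R := fun t => (t == s)%:R.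

(* twisted distributions on pi : E -> Y: simplicial maps p : Y -> D(E)
   with D(pi) o p = delta *)
Definition twDist (Y E : sdata) (pi : forall n, E n -> Y n)
    (p : forall n, Y n -> E n -> R) : Prop :=
  [/\ forall n y, isDist (p n y),
      forall n i (y : Y n.+1), (i <= n.+1)%N ->
        p n (face n i y) = push (face n i) (p n.+1 y),
      forall n j (y : Y n), (j <= n)%N ->
        p n.+1 (degen n j y) = push (degen n j) (p n y)
    & forall n y, push (@pi n) (p n y) = delta y].

Definition convcomb (Y E : sdata) (t : R) (p q : forall n, Y n -> E n -> R) :
  forall n, Y n -> E n -> R := fun n y e => t * p n y e + (1 - t) * q n y e.

Definition convex_iso (Y E Y' E' : sdata)
    (A : set (forall n, Y n -> E n -> R)) (B : set (forall n, Y' n -> E' n -> R))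
    (F : (forall n, Y n -> E n -> R) -> (forall n, Y' n -> E' n -> R)) : Prop :=
  [/\ forall p, A p -> B (F p),
      forall p q, A p -> A q -> F p = F q -> p = q,
      forall q, B q -> exists2 p, A p & F p = q
    & forall p q (t : R), A p -> A q -> 0 <= t <= 1 ->
        F (convcomb t p q) = convcomb t (F p) (F q)].

Definition sDistQ (H : zmodType) (X : sdata) (Z : forall n, pred (X n))
    (beta : quot Z 2 -> H) : set (forall n, quot Z n -> tprod (twf beta) n -> R) :=
  fun p => twDist (@tproj H _ (twf beta)) p.

Definition twX (H : zmodType) (X : sdata) (Z : forall n, pred (X n))
    (beta : quot Z 2 -> H) n (x : X n.+1) : NH H n := twf beta (qmap Z x).

Definition sDistX0 (H : zmodType) (X : sdata) (Z : forall n, pred (X n))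
    (beta : quot Z 2 -> H) : set (forall n, X n -> tprod (twX beta) n -> R) :=
  fun p => twDist (@tproj H _ (twX beta)) p /\
           forall n (z : X n), Z n z -> p n z = delta ((0 : NH H n), z).

End Dist.

(* Main.v *)
Require Import Defs.
From mathcomp Require Import all_boot all_algebra finmap.
From mathcomp Require Import boolp classical_sets cardinality fsbigop reals.
Set Implicit Arguments. Unset Strict Implicit. Unset Printing Implicit Defensive.
Import GRing.Theory Num.Theory.
Local Open Scope ring_scope.
Local Open Scope classical_set_scope.

Section Push.
Variable R : realType.

Lemma fsum_seq (S : choiceType) (p : S -> R) (r : seq S) (A : set S) :
  uniq r -> (forall x, x \notin r -> p x = 0) ->
  \sum_(x \in A) p x = \sum_(x <- r | x \in A) p x.
Proof.
move=> ur pr; rewrite [RHS]bigfs //; last by move=> i _ ir; apply: pr.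
by congr (\sum_(x \in _) _); apply/seteqP; split=> x /=; rewrite inE.
Qed.

Lemma mem_fiber (S T : choiceType) (f : S -> T) t x :
  (x \in [set x | f x = t]) = (f x == t).
Proof. by apply/idP/eqP => [/set_mem|/mem_set]. Qed.


Definition fsupp (S : choiceType) (p : S -> R) (r : seq S) :=
  forall x, x \notin r -> p x = 0.

Lemma pushE (S T : choiceType) (f : S -> T) (p : S -> R) r t :
  uniq r -> fsupp p r -> push f p t = \sum_(x <- r | f x == t) p x.
Proof.
move=> ur pr; rewrite /push (fsum_seq _ ur pr).
by apply: eq_bigl => x; rewrite mem_fiber.
Qed.

Lemma push_supp (S T : choiceType) (f : S -> T) (p : S -> R) r :
  uniq r -> fsupp p r -> fsupp (push f p) (undup (map f r)).
Proof.
move=> ur pr y; rewrite mem_undup => ny; rewrite (pushE _ _ ur pr).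
rewrite big1_seq // => x /andP[/eqP fx xr]; case/negP: ny.
by rewrite -fx; apply: map_f.
Qed.

Lemma push_comp (S T U : choiceType) (f : S -> T) (g : T -> U) (p : S -> R) r :
  uniq r -> fsupp p r -> push g (push f p) = push (g \o f) p.
Proof.
move=> ur pr; apply/funext => t.
have ur' := undup_uniq (map f r).
rewrite (pushE _ _ ur' (push_supp (f:=f) ur pr)) (pushE _ _ ur pr).
under eq_bigr do rewrite (pushE _ _ ur pr).
under eq_bigr do rewrite big_mkcond /=.
rewrite exchange_big /= [RHS]big_mkcond /=; apply: eq_big_seq => x xr.
have fx : f x \in undup (map f r) by rewrite mem_undup map_f.
rewrite big_mkcond /= (bigD1_seq (f x)) //= eqxx big1 ?addr0; first by case: ifP.
by move=> y ny; case: ifP => // _; case: eqP => // fxy; rewrite fxy eqxx in ny.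
Qed.


Lemma dist_supp (S : choiceType) (p : S -> R) :
  isDist p -> exists r, uniq r /\ fsupp p r.
Proof.
case=> _ fin _; exists (fset_set [set x | p x != 0]); split.
  exact: finmap.fset_uniq.
move=> x; rewrite (in_fset_set fin) => /negP nx.
by apply/eqP; apply/negPn/negP => px; apply: nx; apply/mem_set.
Qed.

Lemma sum_tt (S : choiceType) (q : S -> R) :
  \sum_(x \in [set: S]) q x = push (fun _ => tt) q tt.
Proof.
by rewrite /push; congr (\sum_(x \in _) _); apply/seteqP; split=> x.
Qed.

Lemma push_dist (S T : choiceType) (f : S -> T) (p : S -> R) :
  isDist p -> isDist (push f p).
Proof.
move=> dp; have [r [ur pr]] := dist_supp dp; case: dp => p0 _ p1; split.
- by move=> t; apply: fsumr_ge0 => x _; exact: p0.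
- apply: (sub_finite_set _ (finite_seq (undup (map f r)))) => y /= py.
  by apply: contraNT py => ny; apply/eqP; apply: (push_supp ur pr).
- by rewrite sum_tt (push_comp _ _ ur pr) -sum_tt.
Qed.

Lemma push_delta (S T : choiceType) (f : S -> T) (s : S) :
  push f (delta R s) = delta R (f s).
Proof.
apply/funext => t; rewrite (@pushE _ _ f (delta R s) [:: s] t) //.
  rewrite big_cons big_nil /delta addr0 (_ : (s == s) = true); last exact/eqP.
  by rewrite eq_sym; case: ifP.
by move=> x; rewrite inE /delta => /negbTE ->.
Qed.

Lemma delta_dist (S : choiceType) (s : S) : isDist (delta R s).
Proof.
split.
- by move=> x; rewrite /delta ler0n.
- apply: (sub_finite_set _ (finite_set1 s)) => x /=.
  by rewrite /delta; case: (x =P s) => // _; rewrite /= mulr0n eqxx.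
- rewrite -(fsbig_widen [set s]) //; first by rewrite fsbig_set1 /delta eqxx.
  by move=> x [_ /= xs]; rewrite /delta; case: eqP.
Qed.

Lemma push_id_on (S : choiceType) (f : S -> S) (p : S -> R) :
  (forall e, p e != 0 -> f e = e) -> push f p = p.
Proof.
move=> fid; apply/funext => t; rewrite /push.
have [ftt|nft] := eqVneq (f t) t.
  rewrite -(fsbig_widen [set t]); first by rewrite fsbig_set1.
    by move=> x /= ->.
  move=> x [/= fxt xt]; apply/eqP; apply/negPn/negP => px.
  by apply: xt; rewrite -fxt fid.
have pt : p t = 0.
  by apply/eqP; apply: contraNT nft => pt; rewrite fid.
rewrite pt fsbig1 // => x /= fxt; apply/eqP; apply: contraNT nft => px.
by rewrite -fxt !fid // fxt.
Qed.

Lemma supp_fiber (S T : choiceType) (g : S -> T) (r : S -> R) y :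
  isDist r -> push g r = delta R y -> forall e, r e != 0 -> g e = y.
Proof.
move=> dr prd e re; have [rs [urs prs]] := dist_supp dr.
case: dr => r0 _ _.
have ers : e \in rs by apply: contraNT re => /prs ->.
have : 0 < push g r (g e).
  rewrite (pushE _ _ urs prs) big_mkcond /= (bigD1_seq e) //= eqxx.
  rewrite ltr_pwDl //; first by rewrite lt0r re r0.
  by apply: sumr_ge0 => x _; case: ifP => // _; exact: r0.
by rewrite prd /delta ltr0n; case: (g e =P y).
Qed.

Lemma dist_is_delta (S : choiceType) (r : S -> R) t :
  isDist r -> (forall e, r e != 0 -> e = t) -> r = delta R t.
Proof.
move=> dr rt; have r1 : r t = 1.
  case: dr => _ _ <-; rewrite -(fsbig_widen [set t]) ?fsbig_set1 //.
  move=> x [_ /= xt]; apply/eqP; apply/negPn/negP => rx.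
  by apply: xt; apply: rt.
apply/funext => e; rewrite /delta; case: eqP => [->//|et].
by apply/eqP; apply/negPn/negP => re; apply: et; apply: rt.
Qed.


Lemma push_nz (S T : choiceType) (f : S -> T) (p : S -> R) t :
  push f p t != 0 -> exists2 e, f e = t & p e != 0.
Proof.
move=> h; have [e fe pe] := @fsbigN1 _ _ _ unit S _ (fun _ e => p e) tt h.
by exists e.
Qed.

Lemma push_comp' (S T U : choiceType) (f : S -> T) (g : T -> U) (h : S -> U)
  (p : S -> R) : isDist p -> (forall x, g (f x) = h x) ->
  push g (push f p) = push h p.
Proof.
move=> dp gfh; have [r [ur pr]] := dist_supp dp.
rewrite (push_comp _ _ ur pr); congr push; exact/funext.
Qed.

Lemma push_ext (S T : choiceType) (f g : S -> T) (p : S -> R) :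
  (forall x, f x = g x) -> push f p = push g p.
Proof. by move=> fg; congr push; exact/funext. Qed.

Lemma push_conv (S T : choiceType) (f : S -> T) (a b : S -> R) (t : R) :
  isDist a -> isDist b ->
  push f (fun e => t * a e + (1 - t) * b e) =
  (fun y => t * push f a y + (1 - t) * push f b y).
Proof.
move=> da db; have [ra [ura pra]] := dist_supp da.
have [rb [urb prb]] := dist_supp db.
set r := undup (ra ++ rb); have ur : uniq r := undup_uniq _.
have pa : fsupp a r by move=> x; rewrite mem_undup mem_cat negb_or => /andP[/pra].
have pb : fsupp b r by move=> x; rewrite mem_undup mem_cat negb_or => /andP[_ /prb].
have pc : fsupp (fun e => t * a e + (1 - t) * b e) r.
  by move=> x xr; rewrite pa // pb // !mulr0 addr0.
apply/funext => y; rewrite !(pushE _ _ ur) // big_split /= -!mulr_sumr //.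
Qed.

End Push.

Section Simp.
Unset Implicit Arguments.
Variables (H : zmodType) (X : sdata) (Z : forall n, pred (X n)).
Set Implicit Arguments.
Variable (beta : quot Z 2 -> H).
Hypothesis hZ : subSSet Z.
Hypothesis hb : normCocycle beta.

Lemma qmap_face n i (x : X n.+1) : (i <= n.+1)%N ->
  face n i (qmap Z x) = qmap Z (face n i x).
Proof.
move=> hi; rewrite /qmap /=; case: insubP => [u _ <-//|zx] /=.
by rewrite insubN //= negbK; apply: hZ.1 => //; rewrite negbK in zx.
Qed.

Lemma qmap_degen n j (x : X n) : (j <= n)%N ->
  degen n j (qmap Z x) = qmap Z (degen n j x).
Proof.
move=> hj; rewrite /qmap /=; case: insubP => [u _ <-//|zx] /=.
by rewrite insubN //= negbK; apply: hZ.2 => //; rewrite negbK in zx.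
Qed.

Lemma qmap_val n (u : {x : X n | ~~ Z n x}) : qmap Z (val u) = Some u.
Proof. by rewrite /qmap valK. Qed.

Lemma qmap_Z n (x : X n) : Z n x -> qmap Z x = None.
Proof. by move=> zx; rewrite /qmap insubN // negbK. Qed.

Lemma topfaces_none k : @topfaces (quot Z) k None = None.
Proof. elim: k => [|k IH]. reflexivity. exact: IH. Qed.

Lemma zip0 (s t : seq H) :
  (forall h, h \in s -> h = 0) -> (forall h, h \in t -> h = 0) ->
  forall h, h \in [seq p.1 - p.2 | p <- zip s t] -> h = 0.
Proof.
elim: s t => [|a s IH] [|b t] hs ht h.
- change (h \in [::] -> h = 0). by rewrite in_nil.
- change (h \in [::] -> h = 0). by rewrite in_nil.
- change (h \in [::] -> h = 0). by rewrite in_nil.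
change (h \in (a - b) :: [seq p.1 - p.2 | p <- zip s t] -> h = 0).
rewrite in_cons => /orP[/eqP ->|].
  by rewrite (hs a (mem_head a s)) (ht b (mem_head b t)) subr0.
apply: IH => h' h'in; [apply: hs|apply: ht]; rewrite in_cons h'in orbT; exact: isT.
Qed.

Lemma beta_none : beta None = 0.
Proof. exact: (hb.1 (None : quot Z 1) 0). Qed.

Lemma etaL_none m h : h \in @etaL H (quot Z) beta m None -> h = 0.
Proof.
elim: m h => [|m IH] h.
  change (h \in [::] -> h = 0); by rewrite in_nil.
case: m IH => [|k] IH.
  change (h \in [:: beta None] -> h = 0).
  by rewrite inE => /eqP ->; exact: beta_none.
change (h \in beta (@topfaces (quot Z) k.+1 None) ::
   [seq p.1 - p.2 | p <- zip (@etaL H (quot Z) beta k.+1 None) (@etaL H (quot Z) beta k.+1 None)] -> h = 0).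
rewrite in_cons topfaces_none => /orP[/eqP ->|]; first exact: beta_none.
by apply: zip0; apply: IH.
Qed.

Lemma twf_none n : @twf H (quot Z) beta n None = 0.
Proof.
apply/ffunP => k; rewrite !ffunE.
case: (ltnP k (size (@etaL H (quot Z) beta n None))) => [/(mem_nth 0)/etaL_none //|/(nth_default 0) //].
Qed.


Notation EX n := (tprod (twX beta) n).
Notation EQ n := (tprod (twf beta) n).
Definition T n (e : EX n) : EQ n := (e.1, qmap Z e.2).
Definition Sx n (x : X n) (e : EQ n) : EX n := (e.1, x).

Lemma nget0 n k : nget (0 : NH H n) k = 0.
Proof. by rewrite /nget; case: insub => // o; rewrite ffunE. Qed.

Lemma faceEQ0 n i : face n i ((0, None) : EQ n.+1) = (0, None).
Proof.
rewrite /=; case: ifP => _; congr pair; apply/ffunP => k; rewrite !ffunE ?nget0.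
- rewrite addr0 /= add0r.
  case: (ltnP k (size (@etaL H (quot Z) beta n None))) => [/(mem_nth 0)/etaL_none //|/(nth_default 0) //].
- case: ifP => _; first by []. by case: ifP => _; rewrite ?addr0.
Qed.

Lemma degenEQ0 n j : degen n j ((0, None) : EQ n) = (0, None).
Proof. by rewrite /=; congr pair; apply/ffunP => k; rewrite !ffunE ?nget0 !if_same. Qed.

Lemma T_face n i (e : EX n.+1) : (i <= n.+1)%N -> T (face n i e) = face n i (T e).
Proof.
move=> hi; rewrite /T /=; case: ifP => _ /=; by rewrite -qmap_face.
Qed.

Lemma T_degen n j (e : EX n) : (j <= n)%N -> T (degen n j e) = degen n j (T e).
Proof. by move=> hj; rewrite /T /= -qmap_degen. Qed.

Lemma face_snd n i (e : EX n.+1) : (face n i e).2 = face n i e.2.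
Proof. by rewrite /=; case: eqP => [->|]. Qed.

Lemma degen_snd n j (e : EX n) : (degen n j e).2 = degen n j e.2.
Proof. by []. Qed.

Variable R : realType.
Notation PQ := (forall n, quot Z n -> EQ n -> R).
Notation PX := (forall n, X n -> EX n -> R).
Notation AQ := (@sDistQ R _ _ _ beta).
Notation BX := (@sDistX0 R _ _ _ beta).

Definition F (p : PQ) : PX := fun n x => push (@Sx n x) (p n (qmap Z x)).

Definition G (q : PX) : PQ := fun n y =>
  match y with
  | None => delta R ((0, None) : EQ n)
  | Some u => push (@T n) (q n (val u))
  end.
Arguments F : clear implicits.
Arguments G : clear implicits.

Lemma A_dist p n y : AQ p -> isDist (p n y).
Proof. by case=> d _ _ _. Qed.

Lemma B_dist q n x : BX q -> isDist (q n x).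
Proof. by case=> -[d _ _ _]. Qed.

Lemma A_fib p n y e : AQ p -> p n y e != 0 -> e.2 = y.
Proof.
move=> hp; have [d _ _ pr] := hp.
exact: (supp_fiber (d n y) (pr n y)).
Qed.

Lemma B_fib q n x e : BX q -> q n x e != 0 -> e.2 = x.
Proof.
move=> [hq _]; have [d _ _ pr] := hq.
exact: (supp_fiber (d n x) (pr n x)).
Qed.

Lemma TSx n x (r : EQ n -> R) : isDist r ->
  (forall e, r e != 0 -> e.2 = qmap Z x) -> push (@T n) (push (Sx x) r) = r.
Proof.
move=> dr hr; rewrite (push_comp' _ _ (h := fun e => T (Sx x e))) //.
apply: push_id_on => -[g y] /hr /= ->; by [].
Qed.

Lemma SxT n x (r : EX n -> R) : isDist r ->
  (forall e, r e != 0 -> e.2 = x) -> push (Sx x) (push (@T n) r) = r.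
Proof.
move=> dr hr; rewrite (push_comp' _ _ (h := fun e => Sx x (T e))) //.
apply: push_id_on => -[g y] /hr /= ->; by [].
Qed.

Lemma pNone p n : AQ p -> p n None = delta R ((0, None) : EQ n).
Proof.
move=> hp; have [d _ dg _] := hp.
elim: n => [|n IH].
  apply: dist_is_delta => // -[g y] /(A_fib hp) /= ->.
  by congr pair; apply/ffunP => -[].
rewrite (_ : None = degen n 0 (None : quot Z n)) //.
by rewrite dg // IH push_delta degenEQ0.
Qed.

Lemma F_op m1 m2 (fX : X m1 -> X m2) (fQ : quot Z m1 -> quot Z m2)
  (fE : EX m1 -> EX m2) (fEQ : EQ m1 -> EQ m2) p :
  AQ p ->
  (forall x, qmap Z (fX x) = fQ (qmap Z x)) ->
  (forall e, T (fE e) = fEQ (T e)) ->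
  (forall e, (fE e).2 = fX e.2) ->
  (forall y, p m2 (fQ y) = push fEQ (p m1 y)) ->
  forall x, F p m2 (fX x) = push fE (F p m1 x).
Proof.
move=> hp hX hE h2 hpf x.
set r := p m1 (qmap Z x).
have dr : isDist r by apply: A_dist.
have hr : forall e, r e != 0 -> e.2 = qmap Z x by move=> e; apply: A_fib.
set a := F p m2 (fX x); set b := push fE (F p m1 x).
have da : isDist a by apply/push_dist/A_dist.
have db : isDist b by apply/push_dist/push_dist.
have fa : forall e, a e != 0 -> e.2 = fX x.
  by move=> e /push_nz [e' <- _].
have fb : forall e, b e != 0 -> e.2 = fX x.
  move=> e /push_nz [e' <- /push_nz [e'' <- _]].
  by rewrite h2.
rewrite -(SxT da fa) -(SxT db fb); congr push.
rewrite /a /F TSx; last 2 first.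
- exact: A_dist.
- by move=> e; apply: A_fib.
rewrite hX hpf /b /F (push_comp' _ _ (h := fun e => T (fE e))) //; last exact: push_dist.
rewrite (push_ext _ hE) -(push_comp' _ _ (f := @T m1) (g := fEQ)) //; last exact: push_dist.
by rewrite TSx.
Qed.

Lemma F_A_B p : AQ p -> BX (F p).
Proof.
move=> hp; have [d fc dg pr] := hp; split; first split.
- by move=> n x; apply/push_dist.
- move=> n i x hi; apply: (F_op hp (fQ := face n i) (fEQ := face n i)).
  + by move=> y; rewrite qmap_face.
  + by move=> e; rewrite T_face.
  + by move=> e; rewrite face_snd.
  + by move=> y; rewrite fc.
- move=> n j x hj; apply: (F_op hp (fQ := degen n j) (fEQ := degen n j)).
  + by move=> y; rewrite qmap_degen.
  + by move=> e; rewrite T_degen.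
  + by move=> e; rewrite degen_snd.
  + by move=> y; rewrite dg.
- move=> n x; rewrite /F (push_comp' _ _ (h := fun _ => x)) //.
  apply: dist_is_delta; first exact/push_dist.
  by move=> e /push_nz [e' <-].
- move=> n z zz; rewrite /F qmap_Z // pNone // push_delta.
  by [].
Qed.

Lemma F_inj p q : AQ p -> AQ q -> F p = F q -> p = q.
Proof.
move=> hp hq e; apply: functional_extensionality_dep => n.
apply/funext => -[u|]; last by rewrite !pNone.
rewrite -(qmap_val u).
have ep : p n (qmap Z (val u)) = push (@T n) (F p n (val u)).
  by rewrite /F TSx //; [apply: A_dist | move=> e'; apply: A_fib].
have eq : q n (qmap Z (val u)) = push (@T n) (F q n (val u)).
  by rewrite /F TSx //; [apply: A_dist | move=> e'; apply: A_fib].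
by rewrite ep eq e.
Qed.

Lemma Gq_qmap q n x : BX q -> G q n (qmap Z x) = push (@T n) (q n x).
Proof.
move=> hq; rewrite {1}/qmap; case: insubP => [u _ <-|zx] //=.
rewrite negbK in zx; rewrite hq.2 // push_delta /T /= qmap_Z //.
Qed.

Lemma G_op m1 m2 (fX : X m1 -> X m2) (fQ : quot Z m1 -> quot Z m2)
  (fE : EX m1 -> EX m2) (fEQ : EQ m1 -> EQ m2) q :
  BX q ->
  (forall x, qmap Z (fX x) = fQ (qmap Z x)) ->
  (forall e, T (fE e) = fEQ (T e)) ->
  fQ None = None -> fEQ (0, None) = (0, None) ->
  (forall x, q m2 (fX x) = push fE (q m1 x)) ->
  forall y, G q m2 (fQ y) = push fEQ (G q m1 y).
Proof.
move=> hq hX hE hN hE0 hqf [u|]; last first.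
  by rewrite hN /= push_delta hE0.
rewrite -(qmap_val u) -hX !Gq_qmap // hqf.
rewrite (push_comp' _ _ (h := fun e => T (fE e))); [|by apply: B_dist|by []].
rewrite (push_ext _ hE) (push_comp' _ _ (h := fun e => fEQ (T e))) //.
exact: B_dist.
Qed.

Lemma G_A q : BX q -> AQ (G q).
Proof.
move=> hq; have [[d fc dg pr] zc] := hq; split.
- move=> n [u|] /=; [apply/push_dist; exact: B_dist | exact: delta_dist].
- move=> n i y hi; apply: (G_op hq (fX := face n i) (fE := face n i)).
  + by move=> x; rewrite qmap_face.
  + by move=> e; rewrite T_face.
  + by [].
  + exact: faceEQ0.
  + by move=> x; rewrite fc.
- move=> n j y hj; apply: (G_op hq (fX := degen n j) (fE := degen n j)).
  + by move=> x; rewrite qmap_degen.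
  + by move=> e; rewrite T_degen.
  + by [].
  + exact: degenEQ0.
  + by move=> x; rewrite dg.
- move=> n [u|] /=; last by rewrite push_delta.
  rewrite (push_comp' _ _ (h := fun e => qmap Z e.2)) //; last exact: d.
  rewrite -(push_comp' _ _ (f := @tproj H _ (twX beta) n) (g := @qmap X Z n)) //.
  by rewrite pr push_delta qmap_val.
Qed.

Lemma FG q : BX q -> F (G q) = q.
Proof.
move=> hq; apply: functional_extensionality_dep => n; apply/funext => x.
rewrite /F Gq_qmap // SxT //; first exact: B_dist.
by move=> e; apply: B_fib.
Qed.

Lemma F_conv p q t : AQ p -> AQ q ->
  F (convcomb t p q) = convcomb t (F p) (F q).
Proof.
move=> hp hq; apply: functional_extensionality_dep => n; apply/funext => x.
rewrite /F /convcomb push_conv //; exact: A_dist.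
Qed.

End Simp.

Local Close Scope ring_scope.
Local Close Scope classical_set_scope.

Theorem mainTheorem2 (R : realType) (H : zmodType) (X : sdata)
    (Z : forall n, pred (X n)) (beta : quot Z 2 -> H) :
  isSSet X -> subSSet Z -> normCocycle beta ->
  exists F : (forall n, quot Z n -> tprod (twf beta) n -> R) ->
             (forall n, X n -> tprod (twX beta) n -> R),
    convex_iso (@sDistQ R _ _ _ beta) (@sDistX0 R _ _ _ beta) F.
Proof.
move=> _ hZ hb; exists (@F H X Z beta R); split.
- exact: F_A_B.
- exact: F_inj.
- by move=> q hq; exists (G q); [exact: G_A | exact: FG].
- by move=> p q t hp hq _; exact: F_conv.
Qed.
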